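(* Let $q\ge1$, $M>0$, and let $\{J_i\}_{i=1}^m$ be an assignment satisfying $\mathbb{E}\big[(\sum_{i=1}^m(\sum_{j\in J_i}Y_j)^q)^{1/q}\big]\le M$. Then $\sum_{i=1}^m\big(\sum_{j\in J_i}\mathbb{E}[Y'_j]\big)^q\le M^q$.
   Context: Nonnegative random variables $X_{ij}$ (size of job $j$ on machine $i$), independent across different jobs. For an assignment $\{J_i\}$ (partition of $[n]$), $Y_j:=X_{ij}$ where $j\in J_i$. Truncated part $Y'_j:=Y_j\mathbf{1}[Y_j\le M]$. *)

(* Defs.v *)
From HB Require Import structures.
From mathcomp Require Import all_boot all_order all_algebra.
From mathcomp Require Import all_classical all_reals all_analysis.
Set Implicit Arguments. Unset Strict Implicit. Unset Printing Implicit Defensive.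
Import Order.TTheory GRing.Theory Num.Theory.
Local Open Scope classical_set_scope.
Local Open Scope ring_scope.

(* X i j : size of job j (in 'I_n) on machine i (in 'I_m), a random variable on T. *)

(** Stated via the product rule on
    measurable rectangles (a pi-system generating the Borel sigma-algebra of
    R^m), for the whole family of jobs (taking A i j = setT recovers every
    subfamily). *)
Definition jobs_independent d (T : measurableType d) (R : realType)
  (P : probability T R) (m n : nat) (X : 'I_m -> 'I_n -> T -> R) : Prop :=
  forall A : 'I_m -> 'I_n -> set R,
    (forall i j, measurable (A i j)) ->
    P (\bigcap_(j in [set: 'I_n]) \bigcap_(i in [set: 'I_m]) (X i j @^-1` A i j))
    = (\prod_(j < n) P (\bigcap_(i in [set: 'I_m]) (X i j @^-1` A i j)))%E.

(** An assignment {J_i} (partition of [n] into m blocks) is encoded by the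
    function a : 'I_n -> 'I_m, J_i = [set j | a j == i]. *)
Definition Yj (m n : nat) (T : Type) (R : Type) (X : 'I_m -> 'I_n -> T -> R)
  (a : 'I_n -> 'I_m) (j : 'I_n) : T -> R := X (a j) j.

Definition Ytrunc (R : realType) (m n : nat) (T : Type) (X : 'I_m -> 'I_n -> T -> R)
  (a : 'I_n -> 'I_m) (M : R) (j : 'I_n) : T -> R :=
  fun w => if Yj X a j w <= M then Yj X a j w else 0.

(* Main.v *)
Require Import Defs.
From HB Require Import structures.
From mathcomp Require Import all_boot all_order all_algebra.
From mathcomp Require Import all_classical all_reals all_analysis.
From mathcomp Require Import ring lra measurable_realfun.
Import Order.TTheory GRing.Theory Num.Theory.
Local Open Scope classical_set_scope.
Local Open Scope ring_scope.

Lemma powR_invK (R : realType) (S p : R) : 0 <= S -> 0 < p ->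
  (S `^ p^-1) `^ p = S.
Proof.
move=> S0 p0; rewrite -powRrM mulVf ?gt_eqF // powRr1 //.
Qed.

Lemma hoelder_fin (R : realType) (n : nat) (a b : 'I_n -> R) (p q : R) :
  (forall i, 0 <= a i) -> (forall i, 0 <= b i) -> 0 < p -> 0 < q ->
  p^-1 + q^-1 = 1 ->
  \sum_i a i * b i <=
  (\sum_i a i `^ p) `^ p^-1 * (\sum_i b i `^ q) `^ q^-1.
Proof.
move=> a0 b0 p0 q0 pq; elim: n a b a0 b0 => [|n IH] a b a0 b0.
  by rewrite !big_ord0 mulr_ge0 ?powR_ge0.
rewrite !big_ord_recr /=.
set A := \sum_(i < n) a (widen_ord (leqnSn n) i) `^ p.
set B := \sum_(i < n) b (widen_ord (leqnSn n) i) `^ q.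
have A0 : 0 <= A by rewrite sumr_ge0 // => i _; rewrite powR_ge0.
have B0 : 0 <= B by rewrite sumr_ge0 // => i _; rewrite powR_ge0.
apply: le_trans (lerD (IH _ _ (fun i => a0 _) (fun i => b0 _)) (lexx _)) _.
have := hoelder2 (powR_ge0 A p^-1) (a0 ord_max) (powR_ge0 B q^-1) (b0 ord_max) p0 q0 pq.
by rewrite !powR_invK.
Qed.

Lemma dual_fin (R : realType) (m : nat) (x c : 'I_m -> R) (q : R) :
  1 <= q -> (forall i, 0 <= x i) -> (forall i, 0 <= c i) ->
  \sum_i x i * c i `^ (q - 1) <=
  (\sum_i x i `^ q) `^ q^-1 * (\sum_i c i `^ q) `^ (1 - q^-1).
Proof.
move=> q1 x0 c0.
have [->|qn1] := eqVneq q 1.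
  rewrite invr1 subrr powRr0 mulr1 powRr1; last by rewrite sumr_ge0 // => i _; exact: powR_ge0.
  by apply: ler_sum => i _; rewrite powRr0 mulr1 powRr1.
have q1' : 1 < q by rewrite lt_neqAle eq_sym qn1.
have q0 : 0 < q by apply: lt_trans q1'.
have qm0 : 0 < q - 1 by rewrite subr_gt0.
set r := q / (q - 1).
have r0 : 0 < r by rewrite divr_gt0.
have qr : q^-1 + r^-1 = 1.
  rewrite /r invf_div; field; rewrite ?gt_eqF //.
have -> : 1 - q^-1 = r^-1 by rewrite -qr addrC addKr.
have -> : \sum_i c i `^ q = \sum_i (c i `^ (q - 1)) `^ r.
  apply: eq_bigr => i _; rewrite -powRrM /r mulrC divfK ?gt_eqF //.
apply: hoelder_fin => // i; exact: powR_ge0.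
Qed.

Lemma reindex_part (R : realType) (m n : nat) (a : 'I_n -> 'I_m)
  (f : 'I_m -> 'I_n -> R) :
  \sum_(i < m) \sum_(j < n | a j == i) f i j = \sum_(j < n) f (a j) j.
Proof.
rewrite [RHS](partition_big a xpredT) //=.
apply: eq_bigr => i _; apply: eq_bigr => j /eqP <-; done.
Qed.

Lemma powR_le (R : realType) (x y r : R) : 0 <= r -> 0 <= x -> x <= y ->
  x `^ r <= y `^ r.
Proof.
move=> r0 x0 xy; apply: (ge0_ler_powR r0) => //; rewrite nnegrE //.
exact: le_trans xy.
Qed.

Lemma msum_cond (d : measure_display) (T : measurableType d) (R : realType)
  (n : nat) (Q : pred 'I_n) (h : 'I_n -> T -> R) :
  (forall j, measurable_fun setT (h j)) ->
  measurable_fun setT (fun w => \sum_(j < n | Q j) h j w).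
Proof.
move=> mh.
rewrite (_ : (fun w => _) = fun w => \sum_(j < n) (if Q j then h j w else 0)); last first.
  by apply/funext => w; rewrite big_mkcond.
apply: measurable_sum => j; case: (Q j) => //; exact: measurable_cst.
Qed.

Theorem mainTheorem12 (d : measure_display) (T : measurableType d) (R : realType)
  (P : probability T R) (m n : nat) (X : 'I_m -> 'I_n -> T -> R)
  (a : 'I_n -> 'I_m) (q M : R) :
  (forall i j, measurable_fun setT (X i j)) ->
  (forall i j w, 0 <= X i j w) ->
  jobs_independent P X ->
  1 <= q -> 0 < M ->
  (\int[P]_w (((\sum_(i < m) (\sum_(j < n | a j == i) Yj X a j w) `^ q) `^ q^-1)%:E)
     <= M%:E)%E ->
  \sum_(i < m) (\sum_(j < n | a j == i) fine (\int[P]_w (Ytrunc X a M j w)%:E)) `^ q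
    <= M `^ q.
Proof.
move=> mX X0 _ q1 M0 hint.
have q0 : 0 < q by apply: lt_le_trans q1.
set Yt := fun j w => Ytrunc X a M j w.
have mY j : measurable_fun setT (Yj X a j) := mX (a j) j.
have mYt j : measurable_fun setT (Yt j).
  rewrite /Yt /Ytrunc; apply: measurable_fun_ifT.
  - exact: (measurable_realfun.measurable_fun_ler (mY j) (measurable_cst M)).
  - exact: mY.
  - exact: measurable_cst.
have Yt0 j w : 0 <= Yt j w.
  by rewrite /Yt /Ytrunc; case: ifP => // _; apply: X0.
have YtM j w : Yt j w <= M.
  by rewrite /Yt /Ytrunc; case: ifP => // _; apply: ltW.
have YtY j w : Yt j w <= Yj X a j w.
  by rewrite /Yt /Ytrunc; case: ifP => // _; apply: X0.
have mYtE j : measurable_fun setT (EFin \o Yt j).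
  by apply/measurable_EFinP.
have intfin j : ((fine (\int[P]_w (Yt j w)%:E))%:E = \int[P]_w (Yt j w)%:E)%E.
  apply: fineK; rewrite ge0_fin_numE; last by apply: integral_ge0 => w _; rewrite lee_fin.
  apply: (@le_lt_trans _ _ (\int[P]_w (cst M%:E) w)%E).
    apply: ge0_le_integral => //.
    - by move=> w _; rewrite lee_fin.
    - exact: mYtE.
    - by move=> w _; rewrite lee_fin.
  rewrite integral_cst //.

  rewrite [X in (_ * X)%E](_ : _ = 1%E); last exact: probability_setT.
  by rewrite mule1 ltry.
set c := fun i => \sum_(j < n | a j == i) fine (\int[P]_w (Yt j w)%:E).
have c0 i : 0 <= c i.
  by apply: sumr_ge0 => j _; apply: fine_ge0; apply: integral_ge0 => w _; rewrite lee_fin.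
rewrite -/c.
set N := \sum_(i < m) c i `^ q.
have N0 : 0 <= N by apply: sumr_ge0 => i _; apply: powR_ge0.
set K := N `^ (1 - q^-1).
set b := fun i => c i `^ (q - 1).
have b0 i : 0 <= b i by apply: powR_ge0.
set F := fun w => (\sum_(i < m) (\sum_(j < n | a j == i) Yj X a j w) `^ q) `^ q^-1.
have mF : measurable_fun setT F.
  have mS : measurable_fun setT
      (fun w => \sum_(i < m) (\sum_(j < n | a j == i) Yj X a j w) `^ q).
    apply: (@msum_cond _ _ _ _ xpredT) => i.
    exact: (measurableT_comp (measurable_powR q) (@msum_cond _ _ _ _ (fun j => a j == i) _ mY)).
  exact: (measurableT_comp (measurable_powR q^-1) mS).
have K0 : 0 <= K by apply: powR_ge0.
have point w : \sum_(j < n) b (a j) * Yt j w <= F w * K.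
  rewrite -(@reindex_part _ _ _ a (fun i j => b i * Yt j w)).
  under eq_bigr => i _ do rewrite -mulr_sumr mulrC.
  have H := @dual_fin _ _ (fun i => \sum_(j < n | a j == i) Yt j w) c q q1
    (fun i => sumr_ge0 _ (fun j _ => Yt0 j w)) c0.
  rewrite /b; apply: (le_trans H).
  apply: ler_wpM2r; first exact: K0.
  rewrite /F; apply: powR_le; first by rewrite invr_ge0 ltW.
    by apply: sumr_ge0 => i _; apply: powR_ge0.
  apply: ler_sum => i _; apply: powR_le; first exact: ltW.
    by apply: sumr_ge0 => j _.
  by apply: ler_sum => j _.
have key : N <= M * K.
  have NE : N = \sum_(j < n) b (a j) * fine (\int[P]_w (Yt j w)%:E).
    rewrite /N -(@reindex_part _ _ _ a (fun i j => b i * fine (\int[P]_w (Yt j w)%:E))).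
    by apply: eq_bigr => i _; rewrite -mulr_sumr -/(c i) mulrC mulr_powRB1.
  have E1 j : ((b (a j) * fine (\int[P]_w (Yt j w)%:E))%:E
       = \int[P]_w (b (a j) * Yt j w)%:E)%E.
    rewrite EFinM intfin -(ge0_integralZl P measurableT (mYtE j)) //.
    - by move=> w _; rewrite /= lee_fin.
    - by rewrite lee_fin.
  suff : (N%:E <= (M * K)%:E)%E by rewrite lee_fin.
  rewrite NE -sumEFin (eq_bigr _ (fun j _ => E1 j)) -ge0_integral_sum //; last 2 first.
  - move=> j; apply/measurable_EFinP.
    by apply: measurable_funM; [exact: measurable_cst | exact: mYt].
  - by move=> j w _; rewrite lee_fin mulr_ge0.
  apply: (@le_trans _ _ (\int[P]_w (F w * K)%:E)%E).
    apply: ge0_le_integral => //.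
    - by move=> w _; apply: sume_ge0 => j _; rewrite lee_fin mulr_ge0.
    - apply: emeasurable_sum => j; apply/measurable_EFinP.
      by apply: measurable_funM; [exact: measurable_cst | exact: mYt].
    - apply/measurable_EFinP.
      by apply: measurable_funM; [exact: mF | exact: measurable_cst].
    - by move=> w _; rewrite sumEFin lee_fin; exact: point.
  have mFE : measurable_fun setT (EFin \o F) by apply/measurable_EFinP.
  have FE0 : forall w, [set: T] w -> (0 <= (EFin \o F) w)%E.
    by move=> w _; rewrite /= lee_fin powR_ge0.
  have K0E : (0 <= K%:E)%E by rewrite lee_fin.
  have ZR := ge0_integralZr P measurableT mFE FE0 K0E.
  have -> : (\int[P]_w (F w * K)%:E = \int[P]_w (F w)%:E * K%:E)%E.
    rewrite -ZR; apply: eq_integral => w _; by rewrite EFinM.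
  rewrite EFinM; apply: lee_wpmul2r => //.
have [N00|Npos] := eqVneq N 0.
  by rewrite N00 powR_ge0.
have Nsplit : N = N `^ q^-1 * K.
  rewrite /K -powRD; last by rewrite Npos implybT.
  by rewrite addrC subrK powRr1.
have Kpos : 0 < K by rewrite powR_gt0 // lt_neqAle eq_sym Npos N0.
have h1 : N `^ q^-1 <= M.
  by rewrite -(ler_pM2r Kpos) -Nsplit.
rewrite -(@powR_invK _ N q N0 q0); apply: powR_le => //.
- exact: ltW.
- exact: powR_ge0.
Qed.
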